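(* For every rational number $q\in\mathbb{Q}$ there exists a connected graph $G$ with $\iota(G)=q$.
   Context: For a connected graph $G$ on vertices $v_1,\dots,v_n$, its distance matrix is $D=(d(v_i,v_j))_{i,j=1}^n$, where $d$ is the shortest-path distance; $\vec 1$ denotes the all-ones vector. $G$ is distance exceptional if $D\vec x=\vec 1$ has no solution. A curvature potential is a vector $\vec x$ with $D\vec x=\vec 1$. Curvature index $\iota(G)\in\mathbb{R}\cup\{\infty\}$: if $G$ is distance exceptional or has a curvature potential $\vec x$ with $\vec 1^\top\vec x\neq0$, then $\iota(G)$ is the unique real number with $\{D\vec x:\vec 1^\top\vec x=1\}\cap\mathbb{R}\vec 1=\{\iota(G)\vec 1\}$; otherwise $\iota(G)=\infty$. *)

(* Defs.v *)
From HB Require Import structures.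
From mathcomp Require Import all_boot all_order all_algebra.
From mathcomp Require Import reals.
Set Implicit Arguments. Unset Strict Implicit. Unset Printing Implicit Defensive.
Import Order.TTheory GRing.Theory Num.Theory.
Local Open Scope ring_scope.

Definition simple_graph (n : nat) (e : rel 'I_n) : Prop :=
  symmetric e /\ irreflexive e.

Definition connected_graph (n : nat) (e : rel 'I_n) : Prop :=
  (0 < n)%N /\ forall u v : 'I_n, connect e u v.

Fixpoint walk_of_len (n : nat) (e : rel 'I_n) (k : nat) (u v : 'I_n) : bool :=
  match k with
  | 0 => u == v
  | k'.+1 => [exists w, e u w && walk_of_len e k' w v]
  end.

(* shortest-path distance: least k with a walk of length k (for connected
   graphs on n vertices this is always < n). *)
Definition gdist (n : nat) (e : rel 'I_n) (u v : 'I_n) : nat :=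
  find (fun k => walk_of_len e k u v) (iota 0 n).

Definition distmx (R : realType) (n : nat) (e : rel 'I_n) : 'M[R]_n :=
  \matrix_(i, j) (gdist e i j)%:R.

Definition ones (R : realType) (n : nat) : 'cV[R]_n := const_mx 1.

Definition sumv (R : realType) (n : nat) (x : 'cV[R]_n) : R := \sum_i x i 0.

Definition distance_exceptional (R : realType) (n : nat) (e : rel 'I_n) : Prop :=
  ~ exists x : 'cV[R]_n, distmx R e *m x = ones R n.

Definition curvature_potential (R : realType) (n : nat) (e : rel 'I_n)
  (x : 'cV[R]_n) : Prop := distmx R e *m x = ones R n.

(* curvature index, as a relation: [curvature_index_is e i] means iota(G) = i,
   where i : option R, None standing for infinity. *)
Definition curvature_index_is (R : realType) (n : nat) (e : rel 'I_n)
  (i : option R) : Prop :=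
  let finite_case :=
    distance_exceptional R e \/
    exists x : 'cV[R]_n, curvature_potential e x /\ sumv x != 0 in
  (finite_case /\
     exists c : R, i = Some c /\
       (forall y : 'cV[R]_n,
          ((exists x : 'cV[R]_n, sumv x = 1 /\ distmx R e *m x = y) /\
           (exists t : R, y = t *: ones R n))
          <-> y = c *: ones R n))
  \/ (~ finite_case /\ i = None).

(* Main.v *)
Require Import Defs.
From HB Require Import structures.
From mathcomp Require Import all_boot all_order all_algebra.
From mathcomp Require Import reals.
From mathcomp Require Import zify ring lra.
Set Implicit Arguments. Unset Strict Implicit. Unset Printing Implicit Defensive.
Import Order.TTheory GRing.Theory Num.Theory.
Local Open Scope ring_scope.

Lemma find_iota (P : pred nat) n k : (k < n)%N -> P k ->
  (forall j, (j < k)%N -> ~~ P j) -> find P (iota 0 n) = k.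
Proof.
move=> kn Pk Pj.
have -> : iota 0 n = iota 0 k ++ iota k (n - k) by rewrite -iotaD; congr iota; lia.
rewrite find_cat.
have -> : has P (iota 0 k) = false.
  apply/negbTE/hasPn => j; rewrite mem_iota add0n => /Pj //.
rewrite size_iota.
have -> : (n - k = (n - k).-1.+1)%N by lia.
by rewrite /= Pk addn0.
Qed.

Lemma walk1 n (e : rel 'I_n) u v : walk_of_len e 1 u v = e u v.
Proof.
apply/existsP/idP => [[w /andP [euw /eqP <-]] //|euv].
by exists v; rewrite euv eqxx.
Qed.

Lemma walk2 n (e : rel 'I_n) u v :
  walk_of_len e 2 u v = [exists w, e u w && e w v].
Proof.
apply/existsP/existsP => -[w h]; exists w; move: h.
  by have /= -> := walk1 e w v.
by have /= -> := walk1 e w v.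
Qed.

Lemma gdist_diam2 n (e : rel 'I_n) u v : irreflexive e ->
  (u != v -> ~~ e u v -> exists w, e u w && e w v) ->
  gdist e u v = if u == v then 0%N else if e u v then 1%N else 2%N.
Proof.
move=> irr cn; rewrite /gdist.
have un := ltn_ord u; have vn := ltn_ord v.
case: eqP => [<-|/eqP uv].
  apply: find_iota => //=; first by lia.
case: ifP => euv.
  apply: find_iota => //; first by (have: (u : nat) != v by []); lia.
    by rewrite walk1.
  by move=> j; rewrite ltnS leqn0 => /eqP ->.
have [w /andP [euw ewv]] := cn uv (negbT euv).
have wu : w != u by apply: contraTneq euw => ->; rewrite irr.
have wv : w != v by apply: contraTneq ewv => ->; rewrite irr.
have wn := ltn_ord w.
apply: find_iota.
- have h1 : (u : nat) != v by [].
  have h2 : (w : nat) != u by [].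
  have h3 : (w : nat) != v by []. lia.
- by rewrite walk2; apply/existsP; exists w; rewrite euw.
- move=> j; case: j => [|[|j]] // _; try by [].
  by rewrite walk1 euv.
Qed.

Lemma dotE (R : realType) n (a b : 'cV[R]_n) :
  (a^T *m b) 0 0 = \sum_i a i 0 * b i 0.
Proof. by rewrite !mxE; apply: eq_bigr => i _; rewrite mxE. Qed.

Lemma sumvZ (R : realType) n (c : R) (x : 'cV[R]_n) : sumv (c *: x) = c * sumv x.
Proof. by rewrite /sumv mulr_sumr; apply: eq_bigr => i _; rewrite mxE. Qed.

Lemma pot_index (R : realType) n (e : rel 'I_n) (x0 : 'cV[R]_n) :
  (distmx R e)^T = distmx R e -> curvature_potential e x0 -> sumv x0 != 0 ->
  curvature_index_is e (Some (sumv x0)^-1).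
Proof.
move=> sym pot s0; left; split; first by right; exists x0.
exists (sumv x0)^-1; split => // y; split.
- move=> [[x' [sx' <-]] [t yt]]; rewrite yt.
  suff ts : t * sumv x0 = 1.
    by have -> // : t = (sumv x0)^-1 by apply: (mulIf s0); rewrite ts mulVf.
  have h : x0^T *m (distmx R e *m x') = (ones R n)^T *m x'.
    by rewrite mulmxA -{1}sym -trmx_mul pot.
  have := congr1 (fun M : 'M[R]_1 => M 0 0) h.
  rewrite yt -scalemxAr mxE !dotE /=.
  have E1 : \sum_i x0 i 0 * ones R n i 0 = sumv x0.
    by apply: eq_bigr => i _; rewrite mxE mulr1.
  have E2 : \sum_i ones R n i 0 * x' i 0 = sumv x'.
    by apply: eq_bigr => i _; rewrite !mxE mul1r.
  by rewrite E1 E2 sx'.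
- move=> ->; split; last by exists (sumv x0)^-1.
  exists ((sumv x0)^-1 *: x0); split; first by rewrite sumvZ mulVf.
  by rewrite -scalemxAr pot.
Qed.

Definition V k s m : finType := (('I_k * 'I_s) + 'I_m)%type.

Definition same k s m (a b : V k s m) : bool :=
  match a, b with
  | inl (p, _), inl (p', _) => p == p'
  | inr j, inr j' => j == j'
  | _, _ => false
  end.

Definition mpE k s m : rel 'I_#|V k s m| :=
  fun u v => ~~ same (enum_val u) (enum_val v).

Lemma same_refl k s m (a : V k s m) : same a a.
Proof. by case: a => [[p j]|j] /=. Qed.

Lemma same_sym k s m (a b : V k s m) : same a b = same b a.
Proof. by case: a => [[p j]|j]; case: b => [[p' j']|j'] //=; rewrite eq_sym. Qed.

Lemma sum_enum (R : realType) k s m (F : V k s m -> R) :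
  \sum_(j < #|V k s m|) F (enum_val j) = \sum_b F b.
Proof. by rewrite -big_enum_val. Qed.

Lemma mpE_irr k s m : irreflexive (@mpE k s m).
Proof. by move=> u; rewrite /mpE same_refl. Qed.

Lemma mpE_sym k s m : symmetric (@mpE k s m).
Proof. by move=> u v; rewrite /mpE same_sym. Qed.

Lemma mpE_cn k s m (m0 : (0 < m)%N) (u v : 'I_#|V k s m|) :
  u != v -> ~~ mpE u v -> exists w, mpE u w && mpE w v.
Proof.
rewrite /mpE negbK => uv suv.
exists (enum_rank (inr (Ordinal m0) : V k s m)); rewrite enum_rankK.
move: uv suv; rewrite -(inj_eq (@enum_val_inj _ _)).
case: (enum_val u) => [[p j]|j]; case: (enum_val v) => [[p' j']|j'] //=.
by move=> /negP nj /eqP ejj; case: nj; rewrite ejj.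
Qed.

Lemma gdist_mp k s m (m0 : (0 < m)%N) (u v : 'I_#|V k s m|) :
  gdist (@mpE k s m) u v =
  if enum_val u == enum_val v then 0%N
  else if same (enum_val u) (enum_val v) then 2%N else 1%N.
Proof.
rewrite gdist_diam2; [|exact: mpE_irr|exact: mpE_cn].
rewrite (inj_eq (@enum_val_inj _ _)) /mpE.
by case: (_ == _) => //; case: same.
Qed.

Lemma mp_simple k s m : simple_graph (@mpE k s m).
Proof. by split; [exact: mpE_sym|exact: mpE_irr]. Qed.

Lemma mp_connected k s m (m0 : (0 < m)%N) : connected_graph (@mpE k s m).
Proof.
split.
  by rewrite card_sum card_prod !card_ord; lia.
move=> u v.
have [->|uv] := eqVneq u v; first exact: connect0.
case euv: (mpE u v); first exact: connect1.
have [w /andP [h1 h2]] := mpE_cn m0 uv (negbT euv).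
by apply: connect_trans (connect1 h1) (connect1 h2).
Qed.

Definition gval (R : realType) k s m (al be : R) (a : V k s m) : R :=
  match a with inl _ => al | inr _ => be end.

Definition mpx (R : realType) k s m (al be : R) : 'cV[R]_#|V k s m| :=
  \col_i gval al be (enum_val i).

Lemma sum_delta (R : realType) (T : finType) (a : T) (F : T -> R) :
  \sum_b (a == b)%:R * F b = F a.
Proof.
rewrite (bigD1 a) //= eqxx mul1r big1 ?addr0 // => b ba.
by rewrite eq_sym (negbTE ba) mul0r.
Qed.

Lemma distmx_mp (R : realType) k s m (m0 : (0 < m)%N) i j :
  distmx R (@mpE k s m) i j =
  1 + (same (enum_val i) (enum_val j))%:R - 2 * (enum_val i == enum_val j)%:R.
Proof.
rewrite mxE gdist_mp //.
case: eqP => [->|_]; first by rewrite same_refl /=; ring.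
by case: same => /=; ring.
Qed.

Lemma distmx_mp_sym (R : realType) k s m (m0 : (0 < m)%N) :
  (distmx R (@mpE k s m))^T = distmx R (@mpE k s m).
Proof.
by apply/matrixP => i j; rewrite mxE !distmx_mp // same_sym eq_sym.
Qed.

Lemma sum_g (R : realType) k s m (al be : R) :
  \sum_(b : V k s m) gval al be b = (k * s)%:R * al + m%:R * be.
Proof.
rewrite (big_sumType _ _ (I1 := ('I_k * 'I_s)%type) (I2 := 'I_m)).
rewrite !sumr_const.
have e1 : #|(xpredT : pred ('I_k * 'I_s)%type)| = (k*s)%N.
  by rewrite cardT -cardT card_prod !card_ord.
have e2 : #|(xpredT : pred 'I_m)| = m.
  by rewrite cardT -cardT card_ord.

rewrite e1 e2 !mulr_natl. reflexivity. Qed.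

Lemma big_sumT (R : realType) k s m (F : V k s m -> R) :
  \sum_b F b = \sum_(i : 'I_k * 'I_s) F (inl i) + \sum_(i : 'I_m) F (inr i).
Proof.
rewrite (big_sumType _ _ (I1 := ('I_k * 'I_s)%type) (I2 := 'I_m)).
reflexivity.
Qed.

Lemma sum_cls (R : realType) k s m (al be : R) (a : V k s m) :
  \sum_b (same a b)%:R * gval al be b =
  match a with inl _ => s%:R * al | inr _ => be end.
Proof.
rewrite big_sumT.
case: a => [[p j]|j].
  rewrite [X in _ + X]big1 ?addr0; last by move=> b _; rewrite mul0r.
  have -> : \sum_(i : 'I_k * 'I_s) (same (inl (p, j) : V k s m) (inl i))%:R
               * gval al be (inl i : V k s m) =
            \sum_(i : 'I_k * 'I_s) (p == i.1)%:R * al.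
    by apply: eq_bigr => -[p' j'] _.
  rewrite -(pair_big xpredT xpredT (fun p' (j' : 'I_s) => (p == p')%:R * al)) /=.
  under eq_bigr do rewrite -mulr_sumr.
  rewrite (sum_delta p (fun _ => \sum_(j0 : 'I_s) al)) sumr_const.
  have e1 : #|(xpredT : pred 'I_s)| = s by rewrite cardT -cardT card_ord.
  by rewrite e1 mulr_natl.
rewrite big1 ?add0r; last by move=> b _; rewrite mul0r.
exact: (sum_delta j (fun _ => be)).
Qed.

Lemma mp_pot (R : realType) k s m (m0 : (0 < m)%N) (al be : R) :
  (k * s)%:R * al + m%:R * be + (s%:R - 2) * al = 1 ->
  (k * s)%:R * al + m%:R * be - be = 1 ->
  curvature_potential (@mpE k s m) (@mpx R k s m al be) /\
  sumv (@mpx R k s m al be) = (k * s)%:R * al + m%:R * be.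
Proof.
move=> h1 h2; split; last first.
  rewrite /sumv -sum_g -(sum_enum (gval al be)); apply: eq_bigr => i _.
  by rewrite mxE.
apply/matrixP => i j; rewrite ord1 !mxE.
under eq_bigr do rewrite distmx_mp // mxE.
rewrite (sum_enum (fun b => (1 + (same (enum_val i) b)%:R
   - 2 * (enum_val i == b)%:R) * gval al be b)).
have -> : \sum_b (1 + (same (enum_val i) b)%:R - 2 * (enum_val i == b)%:R)
             * gval al be b =
  \sum_b (gval al be b + (same (enum_val i) b)%:R * gval al be b)
  - 2 * \sum_b ((enum_val i == b)%:R * gval al be b).
  rewrite mulr_sumr -sumrB; apply: eq_bigr => b _.
  set a1 := (same _ _)%:R; set c1 := (_ == _)%:R; set g1 := gval _ _ _; ring.
have hs : forall F G : V k s m -> R,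
    \sum_b (F b + G b) = \sum_b F b + \sum_b G b.
  by move=> F G; rewrite big_split.
rewrite hs sum_g sum_cls sum_delta.
case: (enum_val i) => [[p jj]|jj].
  rewrite -[RHS]h1 [gval _ _ _]/=.
  set A := (k * s)%:R; set B := m%:R; set C := s%:R; ring.
rewrite -[RHS]h2 [gval _ _ _]/=.
set A := (k * s)%:R; set B := m%:R; ring.
Qed.

Lemma gen_case (R : realType) (qR : R) k m dn (P : R) :
  (0 < m)%N -> (0 < dn)%N -> qR != 0 -> qR - 1 != 0 ->
  k%:R * (dn%:R + 1) - m%:R * dn%:R = P -> P / dn%:R = (qR - 1)^-1 ->
  exists (n : nat) (e : rel 'I_n),
    simple_graph e /\ connected_graph e /\ @curvature_index_is R n e (Some qR).
Proof.
move=> m0 d0 q0 q1 hP hPd.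
pose s := (2 * dn + 2)%N.
pose S := qR^-1.
pose al := (1 - S) / (2 * dn%:R).
pose be := S - 1.
have dR : (dn%:R : R) != 0 by rewrite pnatr_eq0 -lt0n.
have key : (k * s)%:R * al + m%:R * be = S.
  have -> : (k * s)%:R * al + m%:R * be = (1 - S) * (P / dn%:R).
    rewrite -hP /al /be /s natrM natrD natrM.
    by field.
  by rewrite hPd /S; field; rewrite q0 q1.
have h1 : (k * s)%:R * al + m%:R * be + (s%:R - 2) * al = 1.
  rewrite key /al /s natrD natrM.
  have -> : (2%:R * dn%:R + 2%:R - 2) * ((1 - S) / (2 * dn%:R)) = 1 - S
    by field.
  ring.
have h2 : (k * s)%:R * al + m%:R * be - be = 1.
  by rewrite key /be; ring.
have [pot sx] := mp_pot m0 h1 h2.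
exists #|V k s m|, (@mpE k s m); split; first exact: mp_simple.
split; first exact: mp_connected.
have := pot_index (distmx_mp_sym R k s m0) pot.
rewrite sx key /S invrK; apply.
by rewrite invr_eq0.
Qed.

Lemma zero_case (R : realType) :
  exists (n : nat) (e : rel 'I_n),
    simple_graph e /\ connected_graph e /\ @curvature_index_is R n e (Some 0).
Proof.
pose e : rel 'I_1 := fun _ _ => false.
have D0 : distmx R e = 0.
  apply/matrixP => i j; rewrite !mxE !ord1 /gdist.
  rewrite (@find_iota _ 1 0) //.
have Dx : forall x : 'cV[R]_1, distmx R e *m x = 0 by move=> x; rewrite D0 mul0mx.
exists 1%N, e; split; first by split.
split; first by split => // u v; rewrite !ord1 connect0.
left; split.
  left => -[x]; rewrite Dx => /matrixP /(_ ord0 ord0); rewrite !mxE => /eqP.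
  by rewrite eq_sym oner_eq0.
exists 0; split => // y; split.
  by move=> [[x [_ <-]] _]; rewrite Dx scale0r.
move=> ->; rewrite scale0r; split; last by exists 0; rewrite scale0r.
exists (ones R 1); split; last by rewrite Dx.
by rewrite /sumv big_ord1 mxE.
Qed.

Lemma one_case (R : realType) :
  exists (n : nat) (e : rel 'I_n),
    simple_graph e /\ connected_graph e /\ @curvature_index_is R n e (Some 1).
Proof.
have m0 : (0 < 1)%N by [].
have h1 : ((1 * 2)%N%:R : R) * 2^-1 + 1%:R * 0 + (2%:R - 2) * 2^-1 = 1.
  by rewrite mulr0 addr0 subrr mul0r addr0 mul1n mulfV // pnatr_eq0.
have h2 : ((1 * 2)%N%:R : R) * 2^-1 + 1%:R * 0 - 0 = 1.
  by rewrite mulr0 addr0 subr0 mul1n mulfV // pnatr_eq0.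
have [pot sx] := mp_pot m0 h1 h2.
exists #|V 1 2 1|, (@mpE 1 2 1); split; first exact: mp_simple.
split; first exact: mp_connected.
have := pot_index (distmx_mp_sym R 1 2 m0) pot.
rewrite sx.
have -> : ((1 * 2)%N%:R : R) * 2^-1 + 1%:R * 0 = 1.
  by rewrite mulr0 addr0 mul1n mulfV // pnatr_eq0.
rewrite invr1; apply; exact: oner_neq0.
Qed.

Theorem theorem5p2 (R : realType) (q : rat) :
  exists (n : nat) (e : rel 'I_n),
    simple_graph e /\ connected_graph e /\
    @curvature_index_is R n e (Some (ratr q)).
Proof.
have [->|q0] := eqVneq q 0; first by rewrite rmorph0; exact: zero_case.
have [->|q1] := eqVneq q 1; first by rewrite rmorph1; exact: one_case.
pose r := (q - 1)^-1.
have r0 : r != 0 by rewrite /r invr_eq0 subr_eq0.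
pose p := numq r. pose d := denq r.
have d0 : 0 < d := denq_gt0 r.
have p0 : p != 0 by rewrite /p numq_eq0.
pose dn := `|d|%N. pose pn := `|p|%N.
have dn0 : (0 < dn)%N by rewrite /dn absz_gt0 gt_eqF.
have pn0 : (0 < pn)%N by rewrite /pn absz_gt0.
have hd : (dn%:R : R) = d%:~R by rewrite /dn natr_absz gtr0_norm.
have qR0 : (ratr q : R) != 0 by rewrite fmorph_eq0.
have qR1 : (ratr q : R) - 1 != 0.
  by rewrite subr_eq0; apply: contra q1 => /eqP; rewrite -(rmorph1 (ratr : rat -> R)) => /fmorph_inj ->.
have hr : (p%:~R : R) / dn%:R = (ratr q - 1)^-1.
  rewrite hd.
  have -> : (p%:~R : R) / d%:~R = ratr r by [].
  by rewrite /r fmorphV rmorphB rmorph1.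
have [pp|pp|pe] := ltgtP p 0; last by move: p0; rewrite pe eqxx.
-
  have hp : (pn%:R : R) = - p%:~R by rewrite /pn natr_absz ltr0_norm // mulrNz.
  apply: (@gen_case R (ratr q) (pn * (dn - 1)) (pn * dn) dn (p%:~R)) => //.
    by rewrite muln_gt0 pn0 dn0.
  rewrite !natrM natrB // hp; ring.
-
  have hp : (pn%:R : R) = p%:~R by rewrite /pn natr_absz gtr0_norm.
  apply: (@gen_case R (ratr q) pn pn dn (p%:~R)) => //.
  rewrite hp; ring.
Qed.
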